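(* Let $S$ be a countable discrete inverse semigroup with identity having a minimal projection $e_0\in E(S)$, and let $\alpha\colon S\to\mathcal I(X)$ be a representation. The following are equivalent: (1) $X$ is $S$-amenable; (2) $D_{e_0}$ is not $S$-paradoxical; (3) $D_{e_0}$ is $S$-domain F\o lner.
   Context: Inverse semigroup: each $s$ has a unique $s^*$ with $ss^*s=s$, $s^*ss^*=s^*$; $E(S)=\{s^*s\}$ is the set of idempotents, ordered by $e\le f\iff ef=e$; $e_0$ is minimal if $f\le e_0$, $f\in E(S)$, implies $f=e_0$. A representation is a unital homomorphism $\alpha\colon S\to\mathcal I(X)$ into partial bijections of $X$; $D_{s^*s}$ is the domain of $\alpha_s$, and $D_e$ the domain of $\alpha_e$. $X$ is $S$-amenable if there is a finitely additive $\mu\colon\mathcal P(X)\to[0,\infty]$ with $\mu(X)=1$, $\mu(B)=\mu(\alpha_s(B))$ for $B\subseteq D_{s^*s}$, and $\mu(B)=\mu(B\cap D_{t^*t})$ for all $t\in S$, $B\subseteq X$. $A\subseteq X$ is $S$-paradoxical if there are $A_i,B_j\subseteq X$, $s_i,t_j\in S$ with $A_i\subseteq D_{s_i^*s_i}$, $B_j\subseteq D_{t_j^*t_j}$, $A=\bigsqcup_{i=1}^n\alpha_{s_i}(A_i)=\bigsqcup_{j=1}^m\alpha_{t_j}(B_j)\supseteq A_1\sqcup\dots\sqcup A_n\sqcup B_1\sqcup\dots\sqcup B_m$. $A$ is $S$-domain F\o lner if there are finite non-empty $F_n\subseteq A$ with $|\alpha_s(F_n\cap D_{s^*s})\setminus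 F_n|/|F_n|\to0$ for all $s\in S$. *)

(* Defs.v *)
From Stdlib Require Import Reals List.
Import ListNotations.
Open Scope R_scope.
Set Implicit Arguments.

Record InvSemigroup := {
  carrier :> Type;
  smul : carrier -> carrier -> carrier;
  sone : carrier;
  sstar : carrier -> carrier;
  smul_assoc : forall a b c, smul a (smul b c) = smul (smul a b) c;
  smul_1l : forall a, smul sone a = a;
  smul_1r : forall a, smul a sone = a;
  sstar_l : forall s, smul (smul s (sstar s)) s = s;
  sstar_r : forall s, smul (smul (sstar s) s) (sstar s) = sstar s;
  sstar_uniq : forall s t, smul (smul s t) s = s -> smul (smul t s) t = t -> t = sstar s
}.

Arguments smul {_}.
Arguments sone {_}.
Arguments sstar {_}.

Definition is_proj {S : InvSemigroup} (e : S) : Prop :=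
  exists s : S, e = smul (sstar s) s.

Definition proj_le {S : InvSemigroup} (e f : S) : Prop := smul e f = e.

Definition minimal_proj {S : InvSemigroup} (e0 : S) : Prop :=
  is_proj e0 /\ forall f : S, is_proj f -> proj_le f e0 -> f = e0.

(** Countable (S is discrete, so no topology is needed). *)
Definition countable (T : Type) : Prop :=
  exists f : T -> nat, forall a b, f a = f b -> a = b.

(** Representation alpha : S -> I(X), unital homomorphism into the partial
    bijections of X.  alpha_s has domain rdom s and acts by ract s. *)
Record Rep (S : InvSemigroup) (X : Type) := {
  rdom : S -> X -> Prop;
  ract : S -> X -> X;
  ract_inj : forall s x y, rdom s x -> rdom s y -> ract s x = ract s y -> x = y;
  rdom_mul : forall s t x, rdom (smul s t) x <-> (rdom t x /\ rdom s (ract t x));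
  ract_mul : forall s t x, rdom (smul s t) x -> ract (smul s t) x = ract s (ract t x);
  rdom_one : forall x, rdom sone x;
  ract_one : forall x, ract sone x = x
}.

Arguments rdom {_ _}.
Arguments ract {_ _}.

Section Sets.
Variables (S : InvSemigroup) (X : Type) (al : Rep S X).

Definition subset (A B : X -> Prop) : Prop := forall x, A x -> B x.
Definition disjoint (A B : X -> Prop) : Prop := forall x, A x -> B x -> False.

Definition D (e : S) : X -> Prop := rdom al e.

Definition img (s : S) (B : X -> Prop) : X -> Prop :=
  fun y => exists x, B x /\ rdom al s x /\ y = ract al s x.

Definition disj_union_img (A : X -> Prop) (n : nat) (s : nat -> S)
  (Ai : nat -> X -> Prop) : Prop :=
  (forall x, A x <-> exists i, (i < n)%nat /\ img (s i) (Ai i) x) /\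
  (forall i j, (i < n)%nat -> (j < n)%nat -> i <> j ->
     disjoint (img (s i) (Ai i)) (img (s j) (Ai j))).

Definition paradoxical (A : X -> Prop) : Prop :=
  exists (n m : nat) (Ai Bj : nat -> X -> Prop) (s t : nat -> S),
    (forall i, (i < n)%nat -> subset (Ai i) (D (smul (sstar (s i)) (s i)))) /\
    (forall j, (j < m)%nat -> subset (Bj j) (D (smul (sstar (t j)) (t j)))) /\
    disj_union_img A n s Ai /\
    disj_union_img A m t Bj /\
    (forall i, (i < n)%nat -> subset (Ai i) A) /\
    (forall j, (j < m)%nat -> subset (Bj j) A) /\
    (forall i i', (i < n)%nat -> (i' < n)%nat -> i <> i' -> disjoint (Ai i) (Ai i')) /\
    (forall j j', (j < m)%nat -> (j' < m)%nat -> j <> j' -> disjoint (Bj j) (Bj j')) /\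
    (forall i j, (i < n)%nat -> (j < m)%nat -> disjoint (Ai i) (Bj j)).

Definition card_is (P : X -> Prop) (k : nat) : Prop :=
  exists l : list X, NoDup l /\ length l = k /\ forall x, In x l <-> P x.

Definition domain_Folner (A : X -> Prop) : Prop :=
  exists F : nat -> list X,
    (forall n, NoDup (F n)) /\ (forall n, F n <> []) /\
    (forall n x, In x (F n) -> A x) /\
    forall s : S, exists c : nat -> nat,
      (forall n, card_is (fun y => img s (fun x => In x (F n) /\ D (smul (sstar s) s) x) y
                                   /\ ~ In y (F n)) (c n)) /\
      Un_cv (fun n => INR (c n) / INR (length (F n))) 0.

End Sets.

Inductive ereal := Fin (r : R) | PInf.
Definition eadd (a b : ereal) : ereal :=
  match a, b with Fin x, Fin y => Fin (x + y) | _, _ => PInf end.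
Definition enonneg (a : ereal) : Prop :=
  match a with Fin x => 0 <= x | PInf => True end.

Definition amenable {S : InvSemigroup} {X : Type} (al : Rep S X) : Prop :=
  exists mu : (X -> Prop) -> ereal,
    (forall B, enonneg (mu B)) /\
    (forall A B, disjoint A B -> mu (fun x => A x \/ B x) = eadd (mu A) (mu B)) /\
    mu (fun _ => True) = Fin 1 /\
    (forall (s : S) (B : X -> Prop), subset B (D al (smul (sstar s) s)) ->
        mu B = mu (img al s B)) /\
    (forall (t : S) (B : X -> Prop), mu B = mu (fun x => B x /\ D al (smul (sstar t) t) x)).

(* Main.v *)
Module UF.
From mathcomp Require Import all_boot classical_sets boolp filter.
Lemma my_ultra (T : Type) (F : (T -> Prop) -> Prop) :
  F (fun _ => True) -> (forall A B, F A -> F B -> F (fun x => A x /\ B x)) ->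
  (forall A B : T -> Prop, (forall x, A x -> B x) -> F A -> F B) ->
  (forall A, F A -> exists x, A x) ->
  exists U : (T -> Prop) -> Prop, (forall A, F A -> U A) /\
   (forall A B, U A -> U B -> U (fun x => A x /\ B x)) /\
   (forall A B : T -> Prop, (forall x, A x -> B x) -> U A -> U B) /\
   (forall A, U A -> exists x, A x) /\ (forall A, U A \/ U (fun x => ~ A x)).
Proof.
move=> FT FI FS Fex.
have PF : ProperFilter F.
  apply: Build_ProperFilter_ex => //; split => //.
have [U [UU FU]] := ultraFilterLemma PF.
exists U.
split; first by move=> A; apply: FU.
split; first by move=> A B; apply: filterI.
split; first by move=> A B AB; apply: filterS.
split; first by move=> A UA; apply: (@filter_ex _ U).
move=> A; exact: in_ultra_setVsetC.
Qed.
End UF.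
Require Import Defs.
From Stdlib Require Import Reals List Arith Lra Lia Classical ClassicalEpsilon FunctionalExtensionality PropExtensionality.
Import ListNotations.
Open Scope R_scope.

Section Alg.
Variable S : InvSemigroup.

Definition idem (e : S) := smul e e = e.

Lemma star_star (s : S) : sstar (sstar s) = s.
Proof. symmetry. apply sstar_uniq. apply sstar_r. apply sstar_l. Qed.

Lemma proj_idem (s : S) : idem (smul (sstar s) s).
Proof. unfold idem. rewrite smul_assoc. rewrite sstar_r. reflexivity. Qed.

Lemma idem_star (e : S) : idem e -> sstar e = e.
Proof. intro h. symmetry. apply sstar_uniq; unfold idem in h; rewrite !h; reflexivity. Qed.

Lemma idem_proj (e : S) : idem e -> e = smul (sstar e) e.
Proof. intro h. rewrite idem_star by exact h. symmetry. exact h. Qed.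

Lemma idem_l (e z : S) : idem e -> smul e (smul e z) = smul e z.
Proof. intro h. rewrite smul_assoc. rewrite h. reflexivity. Qed.

Ltac rassoc := repeat rewrite <- smul_assoc.

Lemma idem_mul (e f : S) : idem e -> idem f -> idem (smul e f).
Proof.
  intros he hf.
  set (x := sstar (smul e f)).
  assert (L1 : smul e (smul f (smul x (smul e f))) = smul e f).
  { transitivity (smul (smul (smul e f) x) (smul e f)); [rassoc; reflexivity|apply sstar_l]. }
  assert (L2 : smul x (smul e (smul f x)) = x).
  { transitivity (smul (smul x (smul e f)) x); [rassoc; reflexivity|apply sstar_r]. }
  assert (Hx : smul f (smul x e) = x).
  { unfold x. apply sstar_uniq; fold x.
    - rassoc. rewrite (idem_l f) by exact hf. rewrite (idem_l e) by exact he. exact L1.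
    - rassoc. rewrite (idem_l e) by exact he. rewrite (idem_l f) by exact hf.
      transitivity (smul f (smul (smul x (smul e (smul f x))) e)); [rassoc; reflexivity|].
      rewrite L2. reflexivity. }
  assert (Hxx : smul x x = x).
  { transitivity (smul (smul f (smul x e)) (smul f (smul x e))); [rewrite Hx; reflexivity|].
    transitivity (smul f (smul (smul x (smul e (smul f x))) e)); [rassoc; reflexivity|].
    rewrite L2. exact Hx. }
  assert (Hs : sstar x = x) by (apply idem_star; exact Hxx).
  assert (Hs2 : sstar x = smul e f) by (unfold x; apply star_star).
  unfold idem. rewrite <- Hs2. rewrite Hs. exact Hxx.
Qed.

Lemma idem_comm (e f : S) : idem e -> idem f -> smul e f = smul f e.
Proof.
  intros he hf.
  assert (h1 := idem_mul _ _ he hf). assert (h2 := idem_mul _ _ hf he).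
  rewrite <- (idem_star _ h2).
  unfold idem in h1, h2. repeat rewrite <- smul_assoc in h1. repeat rewrite <- smul_assoc in h2.
  apply sstar_uniq.
  - rassoc. rewrite (idem_l e) by exact he. rewrite (idem_l f) by exact hf. exact h2.
  - rassoc. rewrite (idem_l f) by exact hf. rewrite (idem_l e) by exact he. exact h1.
Qed.

Lemma idem_is_proj (e : S) : idem e -> is_proj e.
Proof. intro h. exists e. apply idem_proj; exact h. Qed.

Lemma is_proj_idem (e : S) : is_proj e -> idem e.
Proof. intros [s ->]. apply proj_idem. Qed.

Variable e0 : S.
Hypothesis Hmin : minimal_proj e0.

Lemma e0_idem : idem e0.
Proof. apply is_proj_idem. apply Hmin. Qed.

Lemma e0_min (f : S) : idem f -> smul e0 f = e0.
Proof.
  intro hf. apply (proj2 Hmin).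
  - apply idem_is_proj. apply idem_mul; [apply e0_idem|exact hf].
  - unfold proj_le. rassoc. rewrite (idem_comm _ _ hf e0_idem).
    rewrite (idem_l e0) by apply e0_idem. reflexivity.
Qed.

Lemma ss_idem (s : S) : idem (smul s (sstar s)).
Proof. pose proof (proj_idem (sstar s)) as h. rewrite star_star in h. exact h. Qed.

Lemma conj_idem (s : S) : idem (smul (sstar s) (smul e0 s)).
Proof.
  unfold idem. rassoc.
  transitivity (smul (sstar s) (smul (smul e0 (smul s (sstar s))) (smul e0 s))); [rassoc; reflexivity|].
  rewrite e0_min by apply ss_idem. rewrite (idem_l e0) by apply e0_idem. reflexivity.
Qed.

End Alg.
Arguments idem {S} e.
Arguments star_star {S} s.
Arguments proj_idem {S} s.
Arguments idem_star {S} e _.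
Arguments idem_l {S} e z _.
Arguments idem_mul {S} e f _ _.
Arguments idem_comm {S} e f _ _.
Arguments e0_idem {S e0} Hmin.
Arguments e0_min {S e0} Hmin f _.
Arguments ss_idem {S} s.
Arguments conj_idem {S e0} Hmin s.

Fixpoint rsum (f : nat -> R) (n : nat) : R :=
  match n with O => 0 | S k => rsum f k + f k end.

Lemma rsum_ext f g n : (forall i, (i < n)%nat -> f i = g i) -> rsum f n = rsum g n.
Proof.
  induction n; intro h; simpl; [reflexivity|].
  rewrite IHn by (intros; apply h; lia). rewrite (h n) by lia. reflexivity.
Qed.

Lemma pred_ext {T : Type} (A B : T -> Prop) : (forall x, A x <-> B x) -> A = B.
Proof. intro h. apply functional_extensionality. intro x. apply propositional_extensionality. apply h. Qed.

Section Meas.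
Variables (T : Type) (mu : (T -> Prop) -> ereal).
Hypothesis mu_nn : forall B, enonneg (mu B).
Hypothesis mu_add : forall A B, (forall x, A x -> B x -> False) -> mu (fun x => A x \/ B x) = eadd (mu A) (mu B).
Hypothesis mu_one : mu (fun _ => True) = Fin 1.

Lemma mu_ext A B : (forall x, A x <-> B x) -> mu A = mu B.
Proof. intro h. rewrite (pred_ext A B h). reflexivity. Qed.

Lemma mu_fin A : exists r, mu A = Fin r /\ 0 <= r /\ r <= 1.
Proof.
  assert (h : mu (fun _ => True) = mu (fun x => A x \/ ~ A x)) by (apply mu_ext; intro x; tauto).
  rewrite mu_add in h by (intros x a b; tauto). rewrite mu_one in h.
  pose proof (mu_nn A) as n1. pose proof (mu_nn (fun x => ~ A x)) as n2.
  destruct (mu A) as [r|]; [|discriminate].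
  destruct (mu (fun x => ~ A x)) as [r'|]; [|discriminate].
  simpl in *. injection h as h. exists r. split; [reflexivity|]. lra.
Qed.

Definition m (A : T -> Prop) : R := match mu A with Fin r => r | PInf => 0 end.

Lemma m_spec A : mu A = Fin (m A) /\ 0 <= m A /\ m A <= 1.
Proof. unfold m. destruct (mu_fin A) as [r [e h]]. rewrite e. auto. Qed.

Lemma m_ext A B : (forall x, A x <-> B x) -> m A = m B.
Proof. intro h. unfold m. rewrite (mu_ext A B h). reflexivity. Qed.

Lemma m_add A B : (forall x, A x -> B x -> False) -> m (fun x => A x \/ B x) = m A + m B.
Proof.
  intro h. pose proof (mu_add A B h) as e.
  destruct (m_spec A) as [ea _]. destruct (m_spec B) as [eb _]. destruct (m_spec (fun x => A x \/ B x)) as [ec _].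
  rewrite ea, eb, ec in e. simpl in e. injection e. auto.
Qed.

Lemma m_nn A : 0 <= m A.
Proof. apply m_spec. Qed.

Lemma m_one : m (fun _ => True) = 1.
Proof. unfold m. rewrite mu_one. reflexivity. Qed.

Lemma m_mono A B : (forall x, A x -> B x) -> m A <= m B.
Proof.
  intro h. rewrite (m_ext B (fun x => A x \/ (B x /\ ~ A x))).
  - rewrite m_add by (intros x a [_ b]; tauto). pose proof (m_nn (fun x => B x /\ ~ A x)). lra.
  - intro x. split; [intro b; destruct (classic (A x)); tauto| intros [a|[b _]]; auto].
Qed.

Lemma m_union (C : nat -> T -> Prop) n :
  (forall i j, (i < n)%nat -> (j < n)%nat -> i <> j -> forall x, C i x -> C j x -> False) ->
  m (fun x => exists i, (i < n)%nat /\ C i x) = rsum (fun i => m (C i)) n.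
Proof.
  induction n; intro h.
  - simpl. assert (e : m (fun _ => False) = m (fun x => False \/ False)) by (apply m_ext; tauto).
    rewrite m_add in e by tauto.
    rewrite (m_ext _ (fun _ => False)) by (intro x; split; [intros [i [hi _]]; lia|intros []]). lra.
  - simpl. rewrite (m_ext _ (fun x => (exists i, (i < n)%nat /\ C i x) \/ C n x)).
    + rewrite (m_add (fun x => exists i, (i < n)%nat /\ C i x) (C n)). rewrite IHn. reflexivity.
      * intros i j hi hj. apply h; lia.
      * intros x [i [hi c1]] c2. exact (h i n ltac:(lia) ltac:(lia) ltac:(lia) x c1 c2).
    + intro x. split.
      * intros [i [hi c]]. destruct (Nat.eq_dec i n) as [->|ne]; [right; exact c|left; exists i; split; [lia|exact c]].
      * intros [[i [hi c]]|c]; [exists i; split; [lia|exact c]|exists n; split; [lia|exact c]].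
Qed.

End Meas.
Arguments m {T} mu A.
Arguments m_ext {T} mu A B _.
Arguments m_add {T} mu _ _ _ A B _.
Arguments m_one {T} mu _.
Arguments m_mono {T} mu _ _ _ A B _.
Arguments m_union {T} mu _ _ _ C n _.
Arguments m {T} mu A.

Section ULim.
Variable U : (nat -> Prop) -> Prop.
Hypothesis U_cof : forall A : nat -> Prop, (exists N, forall n, (N <= n)%nat -> A n) -> U A.
Hypothesis U_I : forall A B, U A -> U B -> U (fun x => A x /\ B x).
Hypothesis U_S : forall A B : nat -> Prop, (forall x, A x -> B x) -> U A -> U B.
Hypothesis U_ex : forall A, U A -> exists x, A x.
Hypothesis U_ult : forall A, U A \/ U (fun x => ~ A x).

Definition ulim_to (a : nat -> R) (L : R) := forall eps, eps > 0 -> U (fun n => Rabs (a n - L) < eps).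

Lemma ulim_uniq a L1 L2 : ulim_to a L1 -> ulim_to a L2 -> L1 = L2.
Proof.
  intros h1 h2. destruct (Req_dec L1 L2) as [|ne]; [assumption|].
  set (e := Rabs (L1 - L2) / 2).
  assert (he : e > 0) by (unfold e; pose proof (Rabs_pos_lt (L1 - L2)); assert (L1 - L2 <> 0) by lra; specialize (H H0); lra).
  destruct (U_ex _ (U_I _ _ (h1 e he) (h2 e he))) as [n [a1 a2]].
  assert (Rabs (L1 - L2) <= Rabs (a n - L1) + Rabs (a n - L2)).
  { replace (L1 - L2) with (-(a n - L1) + (a n - L2)) by ring.
    eapply Rle_trans; [apply Rabs_triang|]. rewrite Rabs_Ropp. lra. }
  unfold e in *. lra.
Qed.

Lemma ulim_exists a : (forall n, 0 <= a n <= 1) -> exists L, ulim_to a L.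
Proof.
  intro hb.
  set (E := fun r => U (fun n => r <= a n)).
  assert (hE0 : E 0) by (apply U_cof; exists O; intros; apply hb).
  assert (hbd : bound E).
  { exists 1. intros r hr. destruct (U_ex _ hr) as [n hn]. specialize (hb n). lra. }
  destruct (completeness E hbd (ex_intro _ 0 hE0)) as [L [hub hlub]].
  exists L. intros eps he.
  assert (h1 : U (fun n => L - eps < a n)).
  { destruct (classic (exists r, E r /\ r > L - eps)) as [[r [hr hr']]|hn].
    - apply (U_S _ _ (fun n h => Rlt_le_trans _ _ _ hr' h) hr).
    - exfalso. assert (L <= L - eps); [|lra]. apply hlub. intros r hr.
      destruct (Rle_dec r (L - eps)); [assumption|]. exfalso. apply hn. exists r. split; [exact hr|lra]. }
  assert (h2 : U (fun n => a n < L + eps)).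
  { destruct (U_ult (fun n => L + eps <= a n)) as [h|h].
    - exfalso. assert (L + eps <= L) by (apply hub; exact h). lra.
    - apply (U_S _ _ (fun n hn => Rnot_le_lt _ _ hn) h). }
  eapply U_S; [|exact (U_I _ _ h1 h2)]. intros n [p q]. apply Rabs_def1; lra.
Qed.

Definition ulim (a : nat -> R) : R :=
  match excluded_middle_informative (exists L, ulim_to a L) with
  | left h => proj1_sig (constructive_indefinite_description _ h)
  | right _ => 0 end.

Lemma ulim_eq a L : ulim_to a L -> ulim a = L.
Proof.
  intro h. unfold ulim. destruct (excluded_middle_informative _) as [h'|n].
  - destruct (constructive_indefinite_description _ h') as [L' hL']. simpl. apply (ulim_uniq a); assumption.
  - exfalso. apply n. exists L. exact h.
Qed.

Lemma ulim_to_const c : ulim_to (fun _ => c) c.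
Proof. intros e he. apply U_cof. exists O. intros. rewrite Rminus_diag, Rabs_R0. exact he. Qed.

Lemma ulim_to_plus a b La Lb : ulim_to a La -> ulim_to b Lb -> ulim_to (fun n => a n + b n) (La + Lb).
Proof.
  intros ha hb e he. eapply U_S; [|exact (U_I _ _ (ha (e/2) ltac:(lra)) (hb (e/2) ltac:(lra)))].
  intros n [h1 h2]; simpl in *. replace (a n + b n - (La + Lb)) with ((a n - La) + (b n - Lb)) by ring.
  eapply Rle_lt_trans; [apply Rabs_triang|]. lra.
Qed.

Lemma ulim_to_close a b d L : (forall n, Rabs (b n - a n) <= d n) -> Un_cv d 0 -> ulim_to a L -> ulim_to b L.
Proof.
  intros hd hc ha e he.
  assert (hU : U (fun n => d n < e/2)).
  { apply U_cof. destruct (hc (e/2) ltac:(lra)) as [N hN]. exists N. intros n hn.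
    specialize (hN n hn). unfold R_dist in hN. rewrite Rminus_0_r in hN.
    pose proof (Rle_abs (d n)). lra. }
  eapply U_S; [|exact (U_I _ _ (ha (e/2) ltac:(lra)) hU)].
  intros n [h1 h2]. replace (b n - L) with ((b n - a n) + (a n - L)) by ring.
  eapply Rle_lt_trans; [apply Rabs_triang|]. specialize (hd n). lra.
Qed.

Lemma ulim_to_nonneg a L : (forall n, 0 <= a n) -> ulim_to a L -> 0 <= L.
Proof.
  intros hn h. destruct (Rle_dec 0 L) as [|hl]; [assumption|]. exfalso.
  destruct (U_ex _ (h (-L) ltac:(lra))) as [n hh]. specialize (hn n).
  pose proof (Rle_abs (a n - L)). lra.
Qed.

End ULim.
Definition bdec {T : Type} (P : T -> Prop) (x : T) : bool :=
  if excluded_middle_informative (P x) then true else false.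

Lemma bdec_true {T} (P : T -> Prop) x : bdec P x = true <-> P x.
Proof. unfold bdec. destruct (excluded_middle_informative (P x)); split; intro; try tauto; discriminate. Qed.

Lemma bdec_false {T} (P : T -> Prop) x : bdec P x = false <-> ~ P x.
Proof. unfold bdec. destruct (excluded_middle_informative (P x)); split; intro; try tauto; discriminate. Qed.

Definition cnt {T : Type} (P : T -> Prop) (l : list T) : nat := length (filter (bdec P) l).

Lemma in_cnt {T} (P : T -> Prop) l x : In x (filter (bdec P) l) <-> In x l /\ P x.
Proof. rewrite filter_In, bdec_true. tauto. Qed.

Lemma cnt_ext {T} (P Q : T -> Prop) l : (forall x, In x l -> (P x <-> Q x)) -> cnt P l = cnt Q l.
Proof.
  intro h. unfold cnt. f_equal. apply filter_ext_in. intros x hx.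
  unfold bdec. destruct (excluded_middle_informative (P x)), (excluded_middle_informative (Q x)); firstorder.
Qed.

Lemma cnt_or {T} (P Q : T -> Prop) l : (forall x, P x -> Q x -> False) ->
  cnt (fun x => P x \/ Q x) l = (cnt P l + cnt Q l)%nat.
Proof.
  intro h. unfold cnt. induction l as [|a l IH]; [reflexivity|]. simpl.
  destruct (bdec (fun x => P x \/ Q x) a) eqn:e1, (bdec P a) eqn:e2, (bdec Q a) eqn:e3; simpl; rewrite IH;
  try lia; rewrite ?bdec_true, ?bdec_false in *; firstorder.
Qed.

Lemma cnt_true {T} (l : list T) : cnt (fun _ => True) l = length l.
Proof.
  unfold cnt. induction l; [reflexivity|]. simpl. unfold bdec at 1.
  destruct (excluded_middle_informative True); [simpl; f_equal; exact IHl|tauto].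
Qed.

Lemma cnt_le {T} (P : T -> Prop) l : (cnt P l <= length l)%nat.
Proof. unfold cnt. apply filter_length_le. Qed.

Lemma NoDup_map_in {A B} (f : A -> B) l : NoDup l -> (forall x y, In x l -> In y l -> f x = f y -> x = y) -> NoDup (map f l).
Proof.
  induction l as [|a l IH]; intros hn hi; simpl; [constructor|].
  inversion hn; subst. constructor.
  - intro hin. apply in_map_iff in hin as [y [e hy]]. assert (y = a) by (apply hi; simpl; auto). subst. contradiction.
  - apply IH; [assumption|]. intros x y hx hy. apply hi; simpl; auto.
Qed.

Lemma NoDup_len_app {T} (l l1 l2 : list T) : NoDup l -> incl l (l1 ++ l2) -> (length l <= length l1 + length l2)%nat.
Proof. intros h1 h2. rewrite <- length_app. apply NoDup_incl_length; assumption. Qed.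
Definition eqdec {T : Type} (x y : T) : {x = y} + {x <> y} := excluded_middle_informative (x = y).

Lemma cnt_split {T} (P : T -> Prop) l : (cnt P l + cnt (fun x => ~ P x) l)%nat = length l.
Proof.
  rewrite <- cnt_or by tauto. rewrite <- (cnt_true l). apply cnt_ext. intros x _. split; [tauto|intros _; apply classic].
Qed.

Section Hall.
Variables (L Rt : Type) (r0 : Rt).

Definition nbhd (nb : L -> list Rt) (l : list L) (y : Rt) := exists v, In v l /\ In y (nb v).
Definition hallc (nb : L -> list Rt) (l : list L) := forall l', NoDup l' -> incl l' l ->
  exists r, NoDup r /\ (length l' <= length r)%nat /\ forall y, In y r -> nbhd nb l' y.
Definition matching (nb : L -> list Rt) (l : list L) (mf : L -> Rt) :=
  (forall v, In v l -> In (mf v) (nb v)) /\ (forall v w, In v l -> In w l -> mf v = mf w -> v = w).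

Lemma hallc_sub nb l l' : hallc nb l -> incl l' l -> hallc nb l'.
Proof. intros h hi l'' hn hi'. apply h; [exact hn|]. intros x hx. apply hi, hi', hx. Qed.

Lemma fin_hall n : forall (l : list L) nb, (length l <= n)%nat -> NoDup l -> hallc nb l -> exists mf, matching nb l mf.
Proof.
  induction n as [|n IH]; intros l nb hlen hnd hh.
  - destruct l; [|simpl in hlen; lia]. exists (fun _ => r0). split; intros v; simpl; tauto.
  - destruct l as [|v rest]; [exists (fun _ => r0); split; intros v; simpl; tauto|].
    destruct (classic (exists l', NoDup l' /\ incl l' (v :: rest) /\ l' <> [] /\ (length l' < length (v :: rest))%nat /\
        forall r, NoDup r -> (forall y, In y r -> nbhd nb l' y) -> (length r <= length l')%nat)) as [[l' [hn' [hi' [hne' [hl' ht]]]]]|hnt].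
    +
      set (l0 := v :: rest) in *.
      destruct (IH l' nb ltac:(simpl in *; lia) hn' (hallc_sub nb l0 l' hh hi')) as [m1 [hm1a hm1b]].
      set (T := nodup eqdec (flat_map nb l')).
      assert (hT : forall y, In y T <-> nbhd nb l' y).
      { intro y. unfold T. rewrite nodup_In, in_flat_map. unfold nbhd. tauto. }
      assert (hTl : (length T <= length l')%nat) by (apply ht; [apply NoDup_nodup|intro y; apply hT]).
      set (rs := filter (bdec (fun w => ~ In w l')) l0).
      assert (hrs : forall w, In w rs <-> In w l0 /\ ~ In w l') by (intro w; unfold rs; rewrite in_cnt; tauto).
      assert (hrsl : (length rs < length l0)%nat).
      { assert (e : (cnt (fun w => In w l') l0 + length rs = length l0)%nat) by (rewrite <- (cnt_split (fun w => In w l') l0); reflexivity).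
        assert (hw0 : exists w0, In w0 l') by (destruct l'; [congruence|eexists; left; reflexivity]).
        destruct hw0 as [w0 hw0].
        assert (hin0 : In w0 (filter (bdec (fun w => In w l')) l0)) by (apply in_cnt; split; [apply hi'; exact hw0|exact hw0]).
        assert (hc : (0 < cnt (fun w => In w l') l0)%nat).
        { unfold cnt. destruct (filter (bdec (fun w => In w l')) l0); [contradiction|simpl; lia]. }
        lia. }
      set (nb2 := fun w => filter (bdec (fun y => ~ In y T)) (nb w)).
      assert (hh2 : hallc nb2 rs).
      { intros l2 hn2 hi2.
        assert (hnd2 : NoDup (l2 ++ l')).
        { apply NoDup_app; [exact hn2|exact hn'|]. intros a ha hb. apply hi2, hrs in ha. tauto. }
        destruct (hh (l2 ++ l') hnd2) as [r [hrn [hrl hry]]].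
        { intros a ha. apply in_app_iff in ha as [ha|ha]; [apply hi2, hrs in ha; tauto|apply hi'; exact ha]. }
        exists (filter (bdec (fun y => ~ In y T)) r). split; [apply NoDup_filter; exact hrn|]. split.
        - pose proof (cnt_split (fun y => ~ In y T) r) as e. unfold cnt in e.
          assert (hq : (length (filter (bdec (fun x => ~ ~ In x T)) r) <= length T)%nat).
          { apply NoDup_incl_length; [apply NoDup_filter; exact hrn|]. intros y hy. apply in_cnt in hy. tauto. }
          rewrite length_app in hrl. lia.
        - intros y hy. apply in_cnt in hy as [hy hyT]. destruct (hry y hy) as [w [hw hyw]].
          apply in_app_iff in hw as [hw|hw].
          + exists w. split; [exact hw|]. apply in_cnt. auto.
          + exfalso. apply hyT. apply hT. exists w. auto. }
      destruct (IH rs nb2 ltac:(simpl in *; lia) (NoDup_filter _ hnd) hh2) as [m2 [hm2a hm2b]].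
      exists (fun w => if excluded_middle_informative (In w l') then m1 w else m2 w). split.
      * intros w hw. destruct (excluded_middle_informative (In w l')) as [e|e].
        -- apply hm1a, e.
        -- assert (hw2 : In w rs) by (apply hrs; auto).
           pose proof (hm2a w hw2) as h. apply in_cnt in h. tauto.
      * intros w w' hw hw' eq.
        destruct (excluded_middle_informative (In w l')) as [e|e];
          destruct (excluded_middle_informative (In w' l')) as [e'|e'].
        -- apply hm1b; assumption.
        -- exfalso. assert (hw2 : In w' rs) by (apply hrs; auto).
           pose proof (hm2a w' hw2) as h. apply in_cnt in h as [_ h]. apply h. apply hT. exists w.
           split; [exact e|]. rewrite <- eq. apply hm1a. exact e.
        -- exfalso. assert (hw2 : In w rs) by (apply hrs; auto).
           pose proof (hm2a w hw2) as h. apply in_cnt in h as [_ h]. apply h. apply hT. exists w'.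
           split; [exact e'|]. rewrite eq. apply hm1a. exact e'.
        -- apply hm2b; [apply hrs; auto|apply hrs; auto|exact eq].
    +
      inversion hnd as [|? ? hvr hndr]; subst.
      destruct (hh [v]) as [r [hrn [hrl hry]]]; [constructor; [simpl; tauto|constructor]|intros a ha; simpl in *; tauto|].
      destruct r as [|y r]; [simpl in hrl; lia|].
      destruct (hry y (or_introl eq_refl)) as [v' [hv' hy]]. simpl in hv'. destruct hv' as [<-|[]].
      set (nb' := fun w => filter (bdec (fun z => z <> y)) (nb w)).
      assert (hh' : hallc nb' rest).
      { intros l2 hn2 hi2. destruct l2 as [|a l2'].
        - exists []. split; [constructor|]. split; [simpl; lia|]. intros _ [].
        - destruct (classic (exists r, NoDup r /\ (forall z, In z r -> nbhd nb (a :: l2') z) /\ (length (a :: l2') < length r)%nat)) as [[r2 [hr2n [hr2y hr2l]]]|hno].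
          + exists (filter (bdec (fun z => z <> y)) r2). split; [apply NoDup_filter, hr2n|]. split.
            * pose proof (cnt_split (fun z => z <> y) r2) as e. unfold cnt in e.
              assert (hq : (length (filter (bdec (fun z => ~ z <> y)) r2) <= length [y])%nat).
              { apply NoDup_incl_length; [apply NoDup_filter; exact hr2n|]. intros z hz. apply in_cnt in hz.
                destruct hz as [_ hz]. left. destruct (eqdec y z); [auto|]. exfalso. apply hz. auto. }
              simpl in hq. lia.
            * intros z hz. apply in_cnt in hz as [hz hzy]. destruct (hr2y z hz) as [w [hw hzw]].
              exists w. split; [exact hw|]. apply in_cnt. auto.
          + exfalso. apply hnt. exists (a :: l2'). split; [exact hn2|]. split; [intros b hb; right; apply hi2, hb|].
            split; [congruence|]. split.
            * simpl. pose proof (NoDup_incl_length hn2 hi2). simpl in *. lia.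
            * intros rr hr hry'. destruct (Nat.le_gt_cases (length rr) (length (a :: l2'))) as [|hg]; [assumption|].
              exfalso. apply hno. exists rr. auto. }
      destruct (IH rest nb' ltac:(simpl in *; lia) hndr hh') as [m' [hma hmb]].
      exists (fun w => if eqdec w v then y else m' w). split.
      * intros w hw. destruct (eqdec w v) as [e|e].
        -- subst. exact hy.
        -- destruct hw as [<-|hw]; [congruence|].
           pose proof (hma w hw) as h. apply in_cnt in h. tauto.
      * intros w w' hw hw' eq.
        destruct (eqdec w v) as [e|e]; destruct (eqdec w' v) as [e'|e'].
        -- congruence.
        -- exfalso. destruct hw' as [<-|hw']; [congruence|]. pose proof (hma w' hw') as h.
           apply in_cnt in h as [_ h]. apply h. symmetry. exact eq.
        -- exfalso. destruct hw as [<-|hw]; [congruence|]. pose proof (hma w hw) as h.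
           apply in_cnt in h as [_ h]. apply h. exact eq.
        -- destruct hw as [<-|hw]; [congruence|]. destruct hw' as [<-|hw']; [congruence|]. apply hmb; assumption.
Qed.

End Hall.
Arguments nbhd {L Rt} nb l y.
Arguments hallc {L Rt} nb l.
Arguments matching {L Rt} nb l mf.

Lemma inf_hall (L Rt : Type) (r0 : Rt) (P : L -> Prop) (nb : L -> list Rt) :
  (forall l, NoDup l -> (forall v, In v l -> P v) ->
     exists r, NoDup r /\ (length l <= length r)%nat /\ forall y, In y r -> nbhd nb l y) ->
  exists psi : L -> Rt, (forall v, P v -> In (psi v) (nb v)) /\
    (forall v w, P v -> P w -> psi v = psi w -> v = w).
Proof.
  intro hyp.
  set (good := fun l : list L => NoDup l /\ forall v, In v l -> P v).
  assert (hfin : forall l, good l -> exists mf, matching nb l mf).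
  { intros l [hn hp]. apply (fin_hall L Rt r0 (length l) l nb (le_n _) hn).
    intros l' hn' hi'. apply hyp; [exact hn'|]. intros v hv. apply hp, hi', hv. }
  set (M := fun l => match excluded_middle_informative (exists mf, good l /\ matching nb l mf) with
                     | left h => proj1_sig (constructive_indefinite_description _ h)
                     | right _ => fun _ => r0 end).
  assert (hM : forall l, good l -> matching nb l (M l)).
  { intros l hg. unfold M. destruct (excluded_middle_informative _) as [h|h].
    - exact (proj2 (proj2_sig (constructive_indefinite_description _ h))).
    - exfalso. apply h. destruct (hfin l hg) as [mf hmf]. exists mf. auto. }
  set (F := fun (A : list L -> Prop) => exists l0, (forall v, In v l0 -> P v) /\ forall l, good l -> incl l0 l -> A l).
  destruct (UF.my_ultra (list L) F) as [U [hFU [hUI [hUS [hUex hUult]]]]].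
  - exists []. split; [intros v []|]. auto.
  - intros A B [l0 [h0 hA]] [l1 [h1 hB]]. exists (l0 ++ l1). split.
    + intros v hv. apply in_app_iff in hv as [hv|hv]; auto.
    + intros l hg hi. split; [apply hA|apply hB]; auto; intros x hx; apply hi, in_app_iff; auto.
  - intros A B hAB [l0 [h0 hA]]. exists l0. split; [exact h0|]. intros l hg hi. apply hAB, hA; assumption.
  - intros A [l0 [h0 hA]]. exists (nodup eqdec l0). apply hA.
    + split; [apply NoDup_nodup|]. intros v hv. apply nodup_In in hv. auto.
    + intros x hx. apply nodup_In. exact hx.
  - assert (hlist : forall v xs, U (fun l => In (M l v) xs) -> exists r, In r xs /\ U (fun l => M l v = r)).
    { intros v xs. induction xs as [|x xs IH]; intro h.
      - destruct (hUex _ h) as [l []].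
      - destruct (hUult (fun l => M l v = x)) as [h1|h1].
        + exists x. split; [left; reflexivity|exact h1].
        + destruct IH as [r [hr hU]].
          * eapply hUS; [|exact (hUI _ _ h1 h)]. intros l [a [b|b]]; [exfalso; apply a; symmetry; exact b|exact b].
          * exists r. split; [right; exact hr|exact hU]. }
    assert (hv : forall v, P v -> exists r, In r (nb v) /\ U (fun l => M l v = r)).
    { intros v hp. apply hlist. apply hFU. exists [v]. split; [intros w [<-|[]]; exact hp|].
      intros l hg hi. apply (proj1 (hM l hg)). apply hi. left. reflexivity. }
    assert (hpsi : forall v, exists r, P v -> In r (nb v) /\ U (fun l => M l v = r)).
    { intro v. destruct (classic (P v)) as [hp|hp].
      - destruct (hv v hp) as [r hr]. exists r. auto.
      - exists r0. intro; contradiction. }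
    exists (fun v => proj1_sig (constructive_indefinite_description _ (hpsi v))). split.
    + intros v hp. destruct (constructive_indefinite_description _ (hpsi v)) as [r hr]. simpl. apply hr, hp.
    + intros v w hpv hpw.
      destruct (constructive_indefinite_description _ (hpsi v)) as [r hr].
      destruct (constructive_indefinite_description _ (hpsi w)) as [r' hr']. simpl. intro e. subst r'.
      destruct (hr hpv) as [_ hu1]. destruct (hr' hpw) as [_ hu2].
      assert (hu3 : U (fun l => good l /\ In v l /\ In w l)).
      { apply hFU. exists [v; w]. split; [intros x [<-|[<-|[]]]; assumption|].
        intros l hg hi. split; [exact hg|]. split; apply hi; simpl; auto. }
      destruct (hUex _ (hUI _ _ hu3 (hUI _ _ hu1 hu2))) as [l [[hg [hvl hwl]] [e1 e2]]].
      apply (proj2 (hM l hg)); try assumption. congruence.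
Qed.
Section RepL.
Variables (S : InvSemigroup) (X : Type) (al : Rep S X) (e0 : S).
Hypothesis Hmin : minimal_proj e0.

Definition Y (x : X) : Prop := rdom al e0 x.

Lemma idem_act (e : S) x : idem e -> rdom al e x -> ract al e x = x.
Proof.
  intros he hx.
  assert (h2 : rdom al (smul e e) x) by (rewrite he; exact hx).
  pose proof (proj1 (rdom_mul al e e x) h2) as [_ hy].
  pose proof (ract_mul al e e x h2) as hm. rewrite he in hm.
  apply (ract_inj al e _ _ hy hx). congruence.
Qed.

Lemma Y_dom (s : S) x : Y x -> rdom al s x /\ Y (ract al s x).
Proof.
  intro hx. unfold Y in *.
  assert (h : rdom al (smul e0 (smul (sstar s) (smul e0 s))) x).
  { rewrite (e0_min Hmin) by apply (conj_idem Hmin). exact hx. }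
  apply rdom_mul in h as [h _]. apply rdom_mul in h as [h _]. apply rdom_mul in h as [h1 h2].
  split; assumption.
Qed.

Lemma Y_proj (t : S) x : Y x -> rdom al (smul (sstar t) t) x.
Proof.
  intro hx. unfold Y in *.
  assert (h : rdom al (smul e0 (smul (sstar t) t)) x).
  { rewrite (e0_min Hmin) by apply proj_idem. exact hx. }
  apply rdom_mul in h as [h _]. exact h.
Qed.

Lemma inv_act (s : S) x : rdom al (smul (sstar s) s) x ->
  rdom al s x /\ rdom al (sstar s) (ract al s x) /\ ract al (sstar s) (ract al s x) = x.
Proof.
  intro h. pose proof h as h'. apply rdom_mul in h' as [h1 h2].
  split; [exact h1|]. split; [exact h2|].
  rewrite <- (ract_mul al _ _ _ h). apply idem_act; [apply proj_idem|exact h].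
Qed.

Lemma Y_back (s : S) x : rdom al (smul (sstar s) s) x -> Y (ract al s x) -> Y x.
Proof.
  intros h hy. destruct (inv_act s x h) as [_ [_ e]]. rewrite <- e.
  apply Y_dom. exact hy.
Qed.

Lemma Y_inv (s : S) x : Y x -> ract al (sstar s) (ract al s x) = x.
Proof. intro h. apply inv_act. apply Y_proj. exact h. Qed.

Lemma Y_inj (s : S) x y : Y x -> Y y -> ract al s x = ract al s y -> x = y.
Proof. intros hx hy e. apply (ract_inj al s); try apply Y_dom; assumption. Qed.

Lemma Y_e0 (t : S) : e0 = smul (sstar t) t -> forall x, Y x <-> rdom al (smul (sstar t) t) x.
Proof. intros e x. unfold Y. rewrite <- e. tauto. Qed.


Lemma amen_not_par : amenable al -> ~ paradoxical al (D al e0).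
Proof.
  intros [mu [hnn [hadd [hone [hinv hres]]]]].
  intros [n [k [Ai [Bj [s [t [hA [hB [[hU1 hD1] [[hU2 hD2] [hAs [hBs [hAA [hBB hAB]]]]]]]]]]]]]].
  set (mm := m mu).
  assert (hext : forall A B, (forall x, A x <-> B x) -> mm A = mm B) by (intros; apply m_ext; assumption).
  destruct (proj1 Hmin) as [u hu].
  assert (hY : mm (D al e0) = 1).
  { rewrite <- (m_one mu hone). unfold mm, m. rewrite (hres u (fun _ => True)).
    rewrite (pred_ext (fun x => True /\ D al (smul (sstar u) u) x) (D al e0)); [reflexivity|].
    intro x. unfold D. rewrite <- hu. tauto. }
  assert (hinvm : forall (s0 : S) B, subset B (D al (smul (sstar s0) s0)) -> mm B = mm (img al s0 B)).
  { intros s0 B hsub. unfold mm, m. rewrite (hinv s0 B hsub). reflexivity. }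
  assert (h1 : mm (D al e0) = rsum (fun i => mm (Ai i)) n).
  { rewrite (hext _ _ hU1). unfold mm. rewrite (m_union mu hnn hadd hone).
    - apply rsum_ext. intros i hi. symmetry. apply hinvm. apply hA. exact hi.
    - intros i j hi hj ne x. apply (hD1 i j hi hj ne). }
  assert (h2 : mm (D al e0) = rsum (fun i => mm (Bj i)) k).
  { rewrite (hext _ _ hU2). unfold mm. rewrite (m_union mu hnn hadd hone).
    - apply rsum_ext. intros i hi. symmetry. apply hinvm. apply hB. exact hi.
    - intros i j hi hj ne x. apply (hD2 i j hi hj ne). }
  set (Z := fun x => (exists i, (i < n)%nat /\ Ai i x) \/ (exists j, (j < k)%nat /\ Bj j x)).
  assert (hZ : mm Z = rsum (fun i => mm (Ai i)) n + rsum (fun i => mm (Bj i)) k).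
  { unfold Z, mm. rewrite (m_add mu hnn hadd hone (fun x => exists i, (i < n)%nat /\ Ai i x) (fun x => exists j, (j < k)%nat /\ Bj j x)).
    - rewrite !(m_union mu hnn hadd hone).
      + reflexivity.
      + intros i j hi hj ne x. apply (hBB i j hi hj ne).
      + intros i j hi hj ne x. apply (hAA i j hi hj ne).
    - intros x [i [hi a]] [j [hj b]]. exact (hAB i j hi hj x a b). }
  assert (hle : mm Z <= mm (D al e0)).
  { unfold mm. apply (m_mono mu hnn hadd hone). intros x [[i [hi a]]|[j [hj b]]].
    - exact (hAs i hi x a). - exact (hBs j hj x b). }
  lra.
Qed.

Lemma ratio_bound (x y a b l : R) : l > 0 -> x <= y + a -> y <= x + b -> 0 <= a -> 0 <= b ->
  Rabs (x / l - y / l) <= a / l + b / l.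
Proof.
  intros hl h1 h2 ha hb. unfold Rdiv.
  assert (hi : / l > 0) by (apply Rinv_0_lt_compat; exact hl).
  apply Rabs_le. split; nra.
Qed.

Lemma ratio01 (a l : R) : l > 0 -> 0 <= a <= l -> 0 <= a / l <= 1.
Proof.
  intros hl [h1 h2]. unfold Rdiv. assert (hi : / l > 0) by (apply Rinv_0_lt_compat; exact hl).
  split; [nra|]. apply (Rmult_le_reg_r l); [exact hl|]. rewrite Rmult_assoc, Rinv_l by lra. lra.
Qed.

Variable U : (nat -> Prop) -> Prop.
Hypothesis U_cof : forall A : nat -> Prop, (exists N, forall n, (N <= n)%nat -> A n) -> U A.
Hypothesis U_I : forall A B, U A -> U B -> U (fun x => A x /\ B x).
Hypothesis U_S : forall A B : nat -> Prop, (forall x, A x -> B x) -> U A -> U B.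
Hypothesis U_ex : forall A, U A -> exists x, A x.
Hypothesis U_ult : forall A, U A \/ U (fun x => ~ A x).

Lemma folner_amen : domain_Folner al (D al e0) -> amenable al.
Proof.
  intros [F [hnd [hne [hin hfol]]]].
  set (r := fun (B : X -> Prop) n => INR (cnt B (F n)) / INR (length (F n))).
  assert (hlen : forall n, INR (length (F n)) > 0).
  { intro n. specialize (hne n). destruct (F n); [contradiction|]. simpl length. apply lt_0_INR. lia. }
  assert (hr01 : forall B n, 0 <= r B n <= 1).
  { intros B n. apply ratio01; [apply hlen|]. split; [apply pos_INR|apply le_INR, cnt_le]. }
  assert (hspec : forall B, ulim_to U (r B) (ulim U (r B))).
  { intro B. destruct (ulim_exists U U_cof U_I U_S U_ex U_ult (r B) (hr01 B)) as [L hL].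
    rewrite (ulim_eq U U_I U_ex (r B) L hL). exact hL. }
  exists (fun B => Fin (ulim U (r B))).
  split; [|split; [|split; [|split]]].
  - intro B. simpl. apply (ulim_to_nonneg U U_ex (r B)); [intro n; apply hr01|apply hspec].
  - intros A B hd. simpl. f_equal. apply (ulim_eq U U_I U_ex).
    assert (e : r (fun x => A x \/ B x) = fun n => r A n + r B n).
    { apply functional_extensionality. intro n. unfold r. rewrite cnt_or by exact hd.
      rewrite plus_INR. unfold Rdiv. ring. }
    rewrite e. apply ulim_to_plus; [exact U_I|exact U_S|apply hspec|apply hspec].
  - f_equal. apply (ulim_eq U U_I U_ex).
    assert (e : r (fun _ => True) = fun _ => 1).
    { apply functional_extensionality. intro n. unfold r. rewrite cnt_true.
      unfold Rdiv. rewrite Rinv_r; [reflexivity|]. specialize (hlen n). lra. }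
    rewrite e. apply ulim_to_const. exact U_cof.
  - intros s B hB. f_equal. symmetry. apply (ulim_eq U U_I U_ex).
    destruct (hfol s) as [c [hc hcv]]. destruct (hfol (sstar s)) as [c' [hc' hcv']].
    assert (k1 : forall n, (cnt B (F n) <= cnt (img al s B) (F n) + c n)%nat).
    { intro n. destruct (hc n) as [lc [hlnd [hll hlin]]]. rewrite <- hll.
      unfold cnt at 1. rewrite <- (length_map (ract al s)).
      apply NoDup_len_app.
      - apply NoDup_map_in; [apply NoDup_filter, hnd|].
        intros x y hx hy. apply in_cnt in hx, hy. apply Y_inj; apply hin with n; tauto.
      - intros y hy. apply in_map_iff in hy as [x [ey hx]]. apply in_cnt in hx as [hx hbx].
        assert (hdx : rdom al s x) by (apply (inv_act s x (hB x hbx))).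
        apply in_app_iff. destruct (classic (In y (F n))) as [hy|hy].
        + left. apply in_cnt. split; [exact hy|]. exists x. split; [exact hbx|]. split; [exact hdx|]. symmetry; exact ey.
        + right. apply hlin. split; [|exact hy]. exists x. split; [split; [exact hx|exact (hB x hbx)]|]. split; [exact hdx|]. symmetry; exact ey. }
    assert (k2 : forall n, (cnt (img al s B) (F n) <= cnt B (F n) + c' n)%nat).
    { intro n. destruct (hc' n) as [lc [hlnd [hll hlin]]]. rewrite <- hll.
      unfold cnt at 1. rewrite <- (length_map (ract al (sstar s))).
      apply NoDup_len_app.
      - apply NoDup_map_in; [apply NoDup_filter, hnd|].
        intros x y hx hy. apply in_cnt in hx, hy. apply Y_inj; apply hin with n; tauto.
      - intros z hz. apply in_map_iff in hz as [y [ez hy]]. apply in_cnt in hy as [hy [x [hbx [hdx ey]]]].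
        destruct (inv_act s x (hB x hbx)) as [_ [_ hxx]].
        assert (ezx : z = x) by (rewrite <- ez, ey; exact hxx). rewrite ezx.
        apply in_app_iff. destruct (classic (In x (F n))) as [hx|hx].
        + left. apply in_cnt. split; assumption.
        + right. apply hlin. split; [|exact hx]. exists y.
          assert (Yy : Y y) by (apply hin with n; exact hy).
          split; [split; [exact hy|apply Y_proj; exact Yy]|]. split; [apply Y_dom; exact Yy|].
          rewrite ey. symmetry. exact hxx. }
    apply (ulim_to_close U U_cof U_I U_S (r B) _ (fun n => INR (c' n) / INR (length (F n)) + INR (c n) / INR (length (F n)))).
    + intro n. unfold r. apply ratio_bound; [apply hlen| | |apply pos_INR|apply pos_INR].
      * rewrite <- plus_INR. apply le_INR. apply k2.
      * rewrite <- plus_INR. apply le_INR. apply k1.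
    + pose proof (CV_plus _ _ _ _ hcv' hcv) as h. rewrite Rplus_0_r in h. exact h.
    + apply hspec.
  - intros t B. f_equal.
    assert (e : r B = r (fun x => B x /\ D al (smul (sstar t) t) x)).
    { apply functional_extensionality. intro n. unfold r. f_equal. f_equal. apply cnt_ext.
      intros x hx. split; [intro b; split; [exact b|apply Y_proj; apply hin with n; exact hx]|tauto]. }
    rewrite e. reflexivity.
Qed.
Definition bc (s : S) (Fl : list X) : nat := length (filter (bdec (fun y => ~ In y Fl)) (map (ract al s) Fl)).
Definition goodF (Fl : list X) : Prop := NoDup Fl /\ Fl <> [] /\ forall x, In x Fl -> Y x.

Lemma bc_list_nodup s Fl : goodF Fl -> NoDup (filter (bdec (fun y => ~ In y Fl)) (map (ract al s) Fl)).
Proof.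
  intros [hn [_ hy]]. apply NoDup_filter. apply NoDup_map_in; [exact hn|].
  intros x z hx hz. apply Y_inj; auto.
Qed.

Lemma imgimg (s : S) (C : X -> Prop) : (forall x, C x -> Y x) ->
  forall x, img al (sstar s) (img al s C) x <-> C x.
Proof.
  intros hC x. split.
  - intros [z [[y [hy [hdy ez]]] [_ ex]]]. subst. rewrite Y_inv by (apply hC; exact hy). exact hy.
  - intro hx. exists (ract al s x). split; [exists x; split; [exact hx|split; [apply Y_dom, hC, hx|reflexivity]]|].
    split; [apply Y_dom, Y_dom, hC, hx|]. symmetry. apply Y_inv, hC, hx.
Qed.

Lemma min_nat (Q : nat -> Prop) : (exists n, Q n) -> exists n, Q n /\ forall m, (m < n)%nat -> ~ Q m.
Proof.
  intros [n hn]. revert hn. induction n as [n IH] using lt_wf_ind. intro hn.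
  destruct (classic (exists m, (m < n)%nat /\ Q m)) as [[m [hm hq]]|hno].
  - exact (IH m hm hq).
  - exists n. split; [exact hn|]. intros m hm hq. apply hno. exists m. auto.
Qed.

Section Expand.
Variables (K : list S) (dl : R).
Hypothesis hdl : dl > 0.
Hypothesis hexp : forall Fl, goodF Fl -> exists s, In s K /\ INR (bc s Fl) > dl * INR (length Fl).

Fixpoint W (p : nat) : list S :=
  match p with O => [sone] | Datatypes.S q => flat_map (fun w => w :: map (fun s => smul s w) K) (W q) end.

Definition E (p : nat) (Fl : list X) : list X :=
  nodup eqdec (flat_map (fun y => map (fun w => ract al w y) (W p)) Fl).

Lemma in_E p Fl z : In z (E p Fl) <-> exists y w, In y Fl /\ In w (W p) /\ z = ract al w y.
Proof.
  unfold E. rewrite nodup_In, in_flat_map. split.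
  - intros [y [hy hz]]. apply in_map_iff in hz as [w [ez hw]]. exists y, w. auto.
  - intros [y [w [hy [hw ez]]]]. exists y. split; [exact hy|]. apply in_map_iff. exists w. auto.
Qed.

Lemma one_W p : In sone (W p).
Proof.
  induction p; simpl; [left; reflexivity|]. apply in_flat_map. exists sone. split; [exact IHp|left; reflexivity].
Qed.

Lemma E_good p Fl : goodF Fl -> goodF (E p Fl).
Proof.
  intros [hn [hne hy]]. split; [apply NoDup_nodup|]. split.
  - destruct Fl as [|y Fl']; [congruence|]. intro h.
    assert (hin : In (ract al sone y) (E p (y :: Fl'))) by (apply in_E; exists y, sone; split; [left; reflexivity|split; [apply one_W|reflexivity]]).
    rewrite h in hin. exact hin.
  - intros z hz. apply in_E in hz as [y [w [hyl [_ ->]]]]. apply Y_dom, hy, hyl.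
Qed.

Lemma E_grow p Fl : goodF Fl -> INR (length (E p Fl)) >= (1 + INR p * dl) * INR (length Fl).
Proof.
  intro hg. induction p as [|p IH].
  - simpl INR. rewrite Rmult_0_l, Rplus_0_r, Rmult_1_l. apply Rle_ge, le_INR.
    apply NoDup_incl_length; [apply hg|]. intros y hy. apply in_E. exists y, sone.
    split; [exact hy|split; [left; reflexivity|rewrite ract_one; reflexivity]].
  - set (F' := E p Fl). assert (hg' : goodF F') by (apply E_good, hg).
    destruct (hexp F' hg') as [s [hsK hs]].
    assert (hl : (length F' + bc s F' <= length (E (Datatypes.S p) Fl))%nat).
    { unfold bc. rewrite <- length_app. apply NoDup_incl_length.
      - apply NoDup_app; [apply hg'|apply bc_list_nodup, hg'|]. intros a ha hb. apply in_cnt in hb. tauto.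
      - intros z hz. apply in_app_iff in hz as [hz|hz].
        + apply in_E in hz as [y [w [hy [hw ->]]]]. apply in_E. exists y, w. split; [exact hy|]. split; [|reflexivity].
          simpl. apply in_flat_map. exists w. split; [exact hw|left; reflexivity].
        + apply in_cnt in hz as [hz _]. apply in_map_iff in hz as [z' [ez hz']].
          apply in_E in hz' as [y [w [hy [hw ez']]]]. apply in_E. exists y, (smul s w).
          assert (Yy : Y y) by (apply hg, hy).
          split; [exact hy|]. split.
          * simpl. apply in_flat_map. exists w. split; [exact hw|right; apply in_map_iff; exists s; auto].
          * rewrite ract_mul; [congruence|]. apply rdom_mul. split; [apply Y_dom, Yy|apply Y_dom, Y_dom, Yy]. }
    apply le_INR in hl. rewrite plus_INR in hl. rewrite S_INR.
    assert (0 <= INR (length Fl)) by apply pos_INR.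
    assert (0 <= INR p) by apply pos_INR.
    fold F' in IH.
    assert (h1 : INR (length F') * (1 + dl) >= (1 + INR p * dl) * INR (length Fl) * (1 + dl))
      by (apply Rmult_ge_compat_r; [lra|exact IH]).
    assert (h2 : 0 <= INR p * dl * dl * INR (length Fl))
      by (apply Rmult_le_pos; [apply Rmult_le_pos; [apply Rmult_le_pos; lra|lra]|lra]).
    lra.
Qed.

Lemma expand_par : paradoxical al (D al e0).
Proof.
  destruct (classic (exists x, Y x)) as [[x0 hx0]|hno].
  2:{ assert (hd : disj_union_img al (D al e0) 0 (fun _ => sone) (fun _ _ => False)).
      { split; [|intros; lia]. intro x. split; [intro hx; exfalso; apply hno; exists x; exact hx|intros [i [hi _]]; lia]. }
      exists O, O, (fun _ _ => False), (fun _ _ => False), (fun _ => sone), (fun _ => sone).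
      split; [intros; lia|]. split; [intros; lia|]. split; [exact hd|]. split; [exact hd|].
      repeat split; intros; lia. }
  destruct (INR_unbounded (/ dl)) as [p hp].
  assert (hpd : INR p * dl >= 1).
  { apply Rle_ge. apply (Rmult_le_reg_r (/ dl)); [apply Rinv_0_lt_compat; lra|].
    rewrite Rmult_assoc, Rinv_r, Rmult_1_l, Rmult_1_r by lra. lra. }
  set (Wl := W p).
  set (nb := fun v : X * bool => map (fun w => ract al w (fst v)) Wl).
  destruct (inf_hall (X * bool) X x0 (fun v => Y (fst v)) nb) as [psi [hpsi1 hpsi2]].
  { intros l hn hp'.
    destruct l as [|v0 l0].
    - exists []. split; [constructor|]. split; [simpl; lia|]. intros _ [].
    - set (l := v0 :: l0) in *.
      set (Fl := nodup eqdec (map fst l)).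
      assert (hgF : goodF Fl).
      { split; [apply NoDup_nodup|]. split.
        - intro h. assert (hin : In (fst v0) Fl) by (apply nodup_In; apply in_map; left; reflexivity).
          rewrite h in hin. exact hin.
        - intros x hx. apply nodup_In, in_map_iff in hx as [v [<- hv]]. apply hp', hv. }
      exists (E p Fl). split; [apply (E_good p Fl hgF)|]. split.
      + assert (hl : (length l <= length Fl * 2)%nat).
        { replace (length Fl * 2)%nat with (length (list_prod Fl [true; false])) by (rewrite length_prod; reflexivity). apply NoDup_incl_length; [exact hn|].
          intros [a b] hab. apply in_prod_iff. split.
          - apply nodup_In. apply in_map_iff. exists (a, b). auto.
          - destruct b; simpl; auto. }
        apply INR_le. apply le_INR in hl. rewrite mult_INR in hl. simpl (INR 2) in hl.
        pose proof (E_grow p Fl hgF). pose proof (pos_INR (length Fl)). nra.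
      + intros y hy. apply in_E in hy as [y0 [w [hy0 [hw ->]]]].
        apply nodup_In, in_map_iff in hy0 as [v [ev hv]]. exists v. split; [exact hv|].
        unfold nb. apply in_map_iff. exists w. split; [congruence|exact hw]. }
  set (k := length Wl).
  set (wi := fun i => nth i Wl sone).
  set (Ybs := fun (b : bool) (i : nat) (y : X) => Y y /\ psi (y, b) = ract al (wi i) y /\
                forall i', (i' < i)%nat -> psi (y, b) <> ract al (wi i') y).
  assert (hYbs : forall b i y, Ybs b i y -> Y y) by (intros b i y h; apply h).
  assert (cover : forall b y, Y y -> exists i, (i < k)%nat /\ Ybs b i y).
  { intros b y hy. pose proof (hpsi1 (y, b) hy) as h. unfold nb in h. apply in_map_iff in h as [w0 [e0' hw0]].
    destruct (In_nth Wl w0 sone hw0) as [i0 [hi0 ei0]].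
    destruct (min_nat (fun i => (i < k)%nat /\ psi (y, b) = ract al (wi i) y)) as [i [[hik hieq] hmin]].
    { exists i0. split; [exact hi0|]. unfold wi. rewrite ei0. simpl in e0'. congruence. }
    exists i. split; [exact hik|]. split; [exact hy|]. split; [exact hieq|].
    intros i' hi' e. apply (hmin i' hi'). split; [lia|exact e]. }
  assert (disjY : forall b i j y, Ybs b i y -> Ybs b j y -> i = j).
  { intros b i j y [_ [e1 h1]] [_ [e2 h2]].
    destruct (Nat.lt_total i j) as [hij|[hij|hij]]; [exfalso; apply (h2 i hij); exact e1|exact hij|exfalso; apply (h1 j hij); exact e2]. }
  assert (hII : forall b i x, img al (sstar (wi i)) (img al (wi i) (Ybs b i)) x <-> Ybs b i x).
  { intros b i. apply imgimg. intros x h. apply h. }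
  assert (hAY : forall b i z, img al (wi i) (Ybs b i) z -> Y z).
  { intros b i z [y [hy [_ ->]]]. apply Y_dom. apply hy. }
  assert (hAdisj : forall b b' i i' z, img al (wi i) (Ybs b i) z -> img al (wi i') (Ybs b' i') z -> b = b' /\ i = i').
  { intros b b' i i' z [y [hy [_ ez]]] [y' [hy' [_ ez']]].
    assert (e : psi (y, b) = psi (y', b')).
    { destruct hy as [_ [e1 _]]. destruct hy' as [_ [e2 _]]. congruence. }
    apply hpsi2 in e; [|apply hy|apply hy']. injection e as -> ->. split; [reflexivity|].
    apply (disjY b' i i' y'); assumption. }
  exists k, k, (fun i => img al (wi i) (Ybs true i)), (fun i => img al (wi i) (Ybs false i)),
    (fun i => sstar (wi i)), (fun i => sstar (wi i)).
  split; [|split; [|split; [|split; [|split; [|split; [|split; [|split]]]]]]].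
  - intros i hi z hz. apply Y_proj. apply (hAY true i z hz).
  - intros i hi z hz. apply Y_proj. apply (hAY false i z hz).
  - split.
    + intro x. split.
      * intro hx. destruct (cover true x hx) as [i [hi hy]]. exists i. split; [exact hi|]. apply hII. exact hy.
      * intros [i [_ h]]. apply hII in h. apply h.
    + intros i j hi hj ne x h1 h2. apply hII in h1, h2. apply ne. apply (disjY true i j x); assumption.
  - split.
    + intro x. split.
      * intro hx. destruct (cover false x hx) as [i [hi hy]]. exists i. split; [exact hi|]. apply hII. exact hy.
      * intros [i [_ h]]. apply hII in h. apply h.
    + intros i j hi hj ne x h1 h2. apply hII in h1, h2. apply ne. apply (disjY false i j x); assumption.
  - intros i hi z hz. apply (hAY true i z hz).
  - intros i hi z hz. apply (hAY false i z hz).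
  - intros i i' hi hi' ne z h1 h2. apply ne. apply (hAdisj true true i i' z h1 h2).
  - intros i i' hi hi' ne z h1 h2. apply ne. apply (hAdisj false false i i' z h1 h2).
  - intros i j hi hj z h1 h2. destruct (hAdisj true false i j z h1 h2) as [e _]. discriminate.
Qed.
End Expand.

Lemma nopar_folner : countable S -> ~ paradoxical al (D al e0) -> domain_Folner al (D al e0).
Proof.
  intros [f hf] hnp.
  assert (hF : forall K dl, dl > 0 -> exists Fl, goodF Fl /\ forall s, In s K -> INR (bc s Fl) <= dl * INR (length Fl)).
  { intros K dl hdl. apply NNPP. intro hn. apply hnp. apply (expand_par K dl hdl).
    intros Fl hg. apply NNPP. intro hn2. apply hn. exists Fl. split; [exact hg|].
    intros s hs. apply Rnot_gt_le. intro hgt. apply hn2. exists s. auto. }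
  set (pick := fun k => match excluded_middle_informative (exists s, f s = k) with
                        | left h => [proj1_sig (constructive_indefinite_description _ h)]
                        | right _ => [] end).
  set (Kn := fun n => flat_map pick (seq 0 (Datatypes.S n))).
  assert (hK : forall s n, (f s <= n)%nat -> In s (Kn n)).
  { intros s n hn. unfold Kn. apply in_flat_map. exists (f s). split; [apply in_seq; lia|].
    unfold pick. destruct (excluded_middle_informative _) as [h|h].
    - destruct (constructive_indefinite_description _ h) as [s' hs']. simpl. left. apply hf. exact hs'.
    - exfalso. apply h. exists s. reflexivity. }
  assert (hpos : forall n, / INR (Datatypes.S n) > 0) by (intro n; apply Rinv_0_lt_compat, lt_0_INR; lia).
  set (Fn := fun n => proj1_sig (constructive_indefinite_description _ (hF (Kn n) _ (hpos n)))).
  assert (hFn : forall n, goodF (Fn n) /\ forall s, In s (Kn n) -> INR (bc s (Fn n)) <= / INR (Datatypes.S n) * INR (length (Fn n))).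
  { intro n. unfold Fn. destruct (constructive_indefinite_description _ _) as [Fl hFl]. exact hFl. }
  exists Fn. split; [intro n; apply hFn|]. split; [intro n; apply hFn|]. split; [intros n x hx; apply (proj2 (proj2 (proj1 (hFn n)))), hx|].
  intro s. exists (fun n => bc s (Fn n)). split.
  - intro n. exists (filter (bdec (fun y => ~ In y (Fn n))) (map (ract al s) (Fn n))).
    split; [apply bc_list_nodup, hFn|]. split; [reflexivity|].
    intro y. rewrite in_cnt, in_map_iff. split.
    + intros [[x [ey hx]] hy]. split; [|exact hy]. exists x.
      assert (Yx : Y x) by (apply (proj1 (hFn n)), hx).
      split; [split; [exact hx|apply Y_proj, Yx]|]. split; [apply Y_dom, Yx|symmetry; exact ey].
    + intros [[x [[hx _] [_ ey]]] hy]. split; [|exact hy]. exists x. auto.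
  - intros eps heps. destruct (INR_unbounded (/ eps)) as [N0 hN0]. exists (max (f s) N0).
    intros n hn. unfold R_dist. rewrite Rminus_0_r.
    destruct (hFn n) as [hg hb]. specialize (hb s (hK s n ltac:(lia))).
    assert (hl : INR (length (Fn n)) > 0).
    { destruct hg as [_ [hne _]]. destruct (Fn n); [congruence|]. simpl length. apply lt_0_INR. lia. }
    assert (hSn : INR (Datatypes.S n) > / eps).
    { apply Rlt_le_trans with (INR N0); [exact hN0|]. apply le_INR. lia. }
    assert (hinv : / INR (Datatypes.S n) < eps).
    { rewrite <- (Rinv_inv eps). apply Rinv_lt_contravar; [|exact hSn].
      apply Rmult_lt_0_compat; [apply Rinv_0_lt_compat; exact heps|apply lt_0_INR; lia]. }
    assert (h0 : 0 <= INR (bc s (Fn n)) / INR (length (Fn n))).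
    { unfold Rdiv. apply Rmult_le_pos; [apply pos_INR|left; apply Rinv_0_lt_compat; exact hl]. }
    rewrite Rabs_pos_eq by exact h0.
    apply Rle_lt_trans with (/ INR (Datatypes.S n)); [|exact hinv].
    unfold Rdiv. apply (Rmult_le_reg_r (INR (length (Fn n)))); [exact hl|].
    rewrite Rmult_assoc, Rinv_l by lra. lra.
Qed.

End RepL.

Theorem mainTheorem11 (S : InvSemigroup) (X : Type) (al : Rep S X) (e0 : S) :
  countable S -> minimal_proj e0 ->
  (amenable al <-> ~ paradoxical al (D al e0)) /\
  (~ paradoxical al (D al e0) <-> domain_Folner al (D al e0)).
Proof.
  intros hc hmin.
  destruct (UF.my_ultra nat (fun A => exists N, forall n, (N <= n)%nat -> A n)) as [U [hFU [hUI [hUS [hUex hUult]]]]].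
  - exists O. auto.
  - intros A B [N1 h1] [N2 h2]. exists (max N1 N2). intros n hn. split; [apply h1|apply h2]; lia.
  - intros A B hAB [N h]. exists N. auto.
  - intros A [N h]. exists N. apply h. lia.
  - pose proof (amen_not_par S X al e0 hmin) as h1.
    pose proof (nopar_folner S X al e0 hmin hc) as h2.
    pose proof (folner_amen S X al e0 hmin U hFU hUI hUS hUex hUult) as h3.
    split; split; tauto.
Qed.
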